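(* Let $N, M, m \in \mathbb{N}$, $n_1,\dots,n_N\in\mathbb{N}$, let $\vec{A}\in\mathbb{K}^{M\times N}$ with columns $\vec{a}_1,\dots,\vec{a}_N$, and let $\vec{B}_i\in\mathbb{K}^{m\times n_i}$ for $i\in[N]$. Let $\vec{H}$ be the hierarchical measurement operator $$\vec{H}(\vec{x}_1,\dots,\vec{x}_N)=\sum_{i=1}^N \vec{a}_i\otimes(\vec{B}_i\vec{x}_i).$$ Let $s\in[N]$ and $\sigma=(\sigma_1,\dots,\sigma_N)$ with $\sigma_i\le n_i$. Assume each $\vec{B}_i$ satisfies the $\sigma_i$-RIP with constant $\delta_{\sigma_i}(\vec{B}_i)$, and $\vec{A}$ satisfies the $s$-RIP with constant $\delta_s(\vec{A})$. Then $$\delta_{(s,\sigma)}(\vec{H})\le \delta_s(\vec{A})+\sup_i\delta_{\sigma_i}(\vec{B}_i)+\delta_s(\vec{A})\cdot\sup_i\delta_{\sigma_i}(\vec{B}_i).$$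
   Context: $\mathbb{K}$ is $\mathbb{R}$ or $\mathbb{C}$; $[N]=\{1,\dots,N\}$; $\otimes$ is the tensor (Kronecker) product of vectors, with $\mathbb{K}^M\otimes\mathbb{K}^m\cong\mathbb{K}^{Mm}$ carrying the Euclidean norm; $\vec{H}$ maps $\mathbb{K}^{n_1}\times\dots\times\mathbb{K}^{n_N}$ (with Euclidean norm $\|\vec{x}\|^2=\sum_i\|\vec{x}_i\|^2$) into $\mathbb{K}^{Mm}$. The $k$-RIP constant $\delta_k(\vec{C})$ of a matrix $\vec{C}$ is the smallest $\delta\ge0$ with $(1-\delta)\|\vec{x}\|^2\le\|\vec{C}\vec{x}\|^2\le(1+\delta)\|\vec{x}\|^2$ for all $k$-sparse $\vec{x}$ (at most $k$ nonzero entries). A vector $\vec{x}=(\vec{x}_1,\dots,\vec{x}_N)\in\mathbb{K}^{n_1}\times\dots\times\mathbb{K}^{n_N}$ is $(s,\sigma)$-sparse if at most $s$ blocks $\vec{x}_i$ are nonzero and each nonzero block $\vec{x}_i$ has at most $\sigma_i$ nonzero entries. The $(s,\sigma)$-HiRIP constant $\delta_{(s,\sigma)}(\vec{H})$ is the smallest $\delta\ge0$ with $(1-\delta)\|\vec{x}\|^2\le\|\vec{H}\vec{x}\|^2\le(1+\delta)\|\vec{x}\|^2$ for all $(s,\sigma)$-sparse $\vec{x}$. *)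

(* Defs.v *)
(* K is any numFieldType (covers K = R via a realType and
   K = C via complex R / algC). *)
From HB Require Import structures.
From mathcomp Require Import all_boot all_order all_algebra.
Set Implicit Arguments. Unset Strict Implicit. Unset Printing Implicit Defensive.
Import Order.TTheory GRing.Theory Num.Theory.
Local Open Scope ring_scope.

Section Defs.
Variable K : numFieldType.

Definition sqnorm (n : nat) (v : 'cV[K]_n) : K := \sum_(j < n) `|v j ord0| ^+ 2.

Definition bsqnorm (N : nat) (n : 'I_N -> nat) (x : forall i : 'I_N, 'cV[K]_(n i)) : K :=
  \sum_(i < N) sqnorm (x i).

Definition sparse (n k : nat) (v : 'cV[K]_n) : Prop :=
  (#|[set j : 'I_n | v j ord0 != 0%R :> K]| <= k)%N.

Definition hsparse (N : nat) (n : 'I_N -> nat) (s : nat) (sigma : 'I_N -> nat)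
  (x : forall i : 'I_N, 'cV[K]_(n i)) : Prop :=
  (#|[set i : 'I_N | x i != 0%R :> 'cV[K]_(n i)]| <= s)%N /\
  (forall i : 'I_N, x i != 0%R -> sparse (sigma i) (x i)).

(* Kronecker product of column vectors a in K^M, b in K^m, as a vector in K^(M*m)
   (lexicographic index (k,l) |-> entry a_k b_l). *)
Definition kron (M m : nat) (a : 'cV[K]_M) (b : 'cV[K]_m) : 'cV[K]_(M * m) :=
  (mxvec (a *m b^T))^T.

Definition least_const (P : K -> Prop) (d : K) : Prop :=
  0 <= d /\ P d /\ (forall d', 0 <= d' -> P d' -> d <= d').

Definition rip_ok (p q : nat) (C : 'M[K]_(p, q)) (k : nat) (d : K) : Prop :=
  forall x : 'cV[K]_q, sparse k x ->
    (1 - d) * sqnorm x <= sqnorm (C *m x) /\ sqnorm (C *m x) <= (1 + d) * sqnorm x.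

Definition rip_const (p q : nat) (C : 'M[K]_(p, q)) (k : nat) (d : K) : Prop :=
  least_const (rip_ok C k) d.

Definition hirip_ok (N : nat) (n : 'I_N -> nat) (p : nat)
  (H : (forall i : 'I_N, 'cV[K]_(n i)) -> 'cV[K]_p)
  (s : nat) (sigma : 'I_N -> nat) (d : K) : Prop :=
  forall x, hsparse s sigma x ->
    (1 - d) * bsqnorm x <= sqnorm (H x) /\ sqnorm (H x) <= (1 + d) * bsqnorm x.

Definition hirip_const (N : nat) (n : 'I_N -> nat) (p : nat)
  (H : (forall i : 'I_N, 'cV[K]_(n i)) -> 'cV[K]_p)
  (s : nat) (sigma : 'I_N -> nat) (d : K) : Prop :=
  least_const (hirip_ok H s sigma) d.

Definition Hop (N M m : nat) (n : 'I_N -> nat) (A : 'M[K]_(M, N))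
  (B : forall i : 'I_N, 'M[K]_(m, n i)) (x : forall i : 'I_N, 'cV[K]_(n i))
  : 'cV[K]_(M * m) :=
  \sum_(i < N) kron (col i A) (B i *m x i).

End Defs.

(* Main.v *)
Require Import Defs.
From HB Require Import structures.
From mathcomp Require Import all_boot all_order all_algebra.
From mathcomp Require Import ring.
Import Order.TTheory GRing.Theory Num.Theory.
Local Open Scope ring_scope.

Lemma sqnorm_ge0 (K : numFieldType) n (v : 'cV[K]_n) : 0 <= sqnorm v.
Proof. by apply: sumr_ge0 => j _; apply: exprn_ge0; apply: normr_ge0. Qed.

Lemma sqnorm0 (K : numFieldType) n : sqnorm (0 : 'cV[K]_n) = 0.
Proof. by apply: big1 => j _; rewrite mxE normr0 expr0n. Qed.

Lemma sqnorm_H (K : numFieldType) (N M m : nat) (n : 'I_N -> nat)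
  (A : 'M[K]_(M, N)) (B : forall i : 'I_N, 'M[K]_(m, n i)) x :
  sqnorm (Hop A B x) =
  \sum_(k < M) \sum_(l < m) `|\sum_(i < N) A k i * (B i *m x i) l ord0| ^+ 2.
Proof.
rewrite /sqnorm (reindex _ (curry_mxvec_bij _ _)) /= pair_bigA.
apply: eq_bigr => [[k l]] _ /=; congr (`| _ | ^+ 2).
rewrite /Hop summxE; apply: eq_bigr => i _.
by rewrite /kron mxE mxvecE mxE big_ord1 !mxE.
Qed.

Lemma le_maxl {K : numFieldType} (a b : K) : a <= Num.max a b.
Proof. by rewrite /Order.max; case: ifP => h //; apply: ltW. Qed.

Lemma le_maxr {K : numFieldType} {a b : K} : 0 <= a -> 0 <= b -> b <= Num.max a b.
Proof.
move=> a0 b0; rewrite /Order.max; case: ifP => h //.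
have [//|ab] := real_leP (ger0_real b0) (ger0_real a0).
by rewrite ab in h.
Qed.

Lemma le_bigmax_seq {K : numFieldType} {I : eqType} (F : I -> K) (r : seq I) i :
  (forall j, 0 <= F j) -> i \in r -> F i <= \big[Num.max/0]_(j <- r) F j.
Proof.
move=> F0; have G : forall r, 0 <= \big[Num.max/0]_(j <- r) F j.
  move=> r'; elim: r' => [|x r' IH]; first by rewrite big_nil lexx.
  by rewrite big_cons; exact: le_trans IH (le_maxr (F0 x) IH).
elim: r => [//|x r IH]; rewrite inE big_cons => /orP [/eqP ->|ir].
  exact: le_maxl.
exact: le_trans (IH ir) (le_maxr (F0 x) (G r)).
Qed.

Theorem theorem1 (K : numFieldType) (N M m : nat) (n : 'I_N -> nat)
  (A : 'M[K]_(M, N)) (B : forall i : 'I_N, 'M[K]_(m, n i))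
  (s : nat) (sigma : 'I_N -> nat)
  (dA : K) (dB : 'I_N -> K) (dH : K) :
  (1 <= s <= N)%N ->
  (forall i : 'I_N, (sigma i <= n i)%N) ->
  rip_const A s dA ->
  (forall i : 'I_N, rip_const (B i) (sigma i) (dB i)) ->
  hirip_const (Hop A B) s sigma dH ->
  dH <= dA + \big[Num.max/0]_(i < N) dB i
        + dA * \big[Num.max/0]_(i < N) dB i.
Proof.
move=> _ _ [dA0 [okA _]] hB [_ [_ minH]].
set D := \big[Num.max/0]_(i < N) dB i.
have D0 : 0 <= D.
  rewrite /D; apply: (big_ind (fun y => 0 <= y)) => //.
  - by move=> a b a0 b0; rewrite /Order.max; case: ifP.
  - by move=> i _; case: (hB i).
have DB i : dB i <= D.
  rewrite /D; apply: le_bigmax_seq; last exact: mem_index_enum.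
  by move=> j; case: (hB j).
apply: minH; first by rewrite addr_ge0 ?mulr_ge0 ?addr_ge0.
move=> x [hs hsp].
set y := fun i => B i *m x i.
have hy i : (1 - D) * sqnorm (x i) <= sqnorm (y i) /\
            sqnorm (y i) <= (1 + D) * sqnorm (x i).
  case: (eqVneq (x i) 0) => [e|nz].
    by rewrite /y /= e mulmx0 !sqnorm0 !mulr0 lexx.
  case: (hB i) => _ [ok _]; have [l u] := ok _ (hsp i nz).
  split.
    apply: le_trans l; apply: ler_wpM2r; first exact: sqnorm_ge0.
    by rewrite lerD2l lerN2.
  apply: le_trans u _; apply: ler_wpM2r; first exact: sqnorm_ge0.
  by rewrite lerD2l.
set SY := \sum_(i < N) sqnorm (y i).
have SYl : (1 - D) * bsqnorm x <= SY.
  by rewrite /bsqnorm mulr_sumr; apply: ler_sum => i _; case: (hy i).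
have SYu : SY <= (1 + D) * bsqnorm x.
  by rewrite /bsqnorm mulr_sumr; apply: ler_sum => i _; case: (hy i).
set c := fun l : 'I_m => (\col_(i < N) (y i) l ord0 : 'cV[K]_N).
have spc l : sparse s (c l).
  apply: leq_trans hs; apply: subset_leq_card; apply/subsetP => i.
  rewrite !inE mxE => h; apply/eqP => e; move: h.
  by rewrite /y /= e mulmx0 mxE eqxx.
have EH : sqnorm (Hop A B x) = \sum_(l < m) sqnorm (A *m c l).
  rewrite sqnorm_H exchange_big; apply: eq_bigr => l _.
  apply: eq_bigr => k _; rewrite mxE; congr (`| _ | ^+ 2).
  by apply: eq_bigr => i _; rewrite /c /y /= mxE.
have EY : SY = \sum_(l < m) sqnorm (c l).
  rewrite /SY /sqnorm exchange_big; apply: eq_bigr => i _.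
  by apply: eq_bigr => l _; rewrite /c /= mxE.
have Hl : (1 - dA) * SY <= sqnorm (Hop A B x).
  rewrite EH EY mulr_sumr; apply: ler_sum => l _; by case: (okA _ (spc l)).
have Hu : sqnorm (Hop A B x) <= (1 + dA) * SY.
  rewrite EH EY mulr_sumr; apply: ler_sum => l _; by case: (okA _ (spc l)).
have X0 : 0 <= bsqnorm x by apply: sumr_ge0 => i _; apply: sqnorm_ge0.
split.
  have [dA1|dA1] := real_leP (ger0_real dA0) (@real1 K).
    apply: le_trans Hl; apply: le_trans (ler_wpM2l _ SYl); last by rewrite subr_ge0.
    rewrite mulrA; apply: ler_wpM2r => //.
    rewrite -subr_ge0.
    have -> : (1 - dA) * (1 - D) - (1 - (dA + D + dA * D)) = (dA * D) *+ 2 by ring.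
    by rewrite mulrn_wge0 // mulr_ge0.
  apply: (@le_trans _ _ 0); last exact: sqnorm_ge0.
  apply: mulr_le0_ge0 => //.
  rewrite subr_le0 -addrA; apply: ler_wpDr; last exact: ltW.
  by rewrite addr_ge0 ?mulr_ge0.
apply: le_trans Hu _; apply: le_trans (ler_wpM2l _ SYu) _.
  by rewrite addr_ge0.
rewrite mulrA; apply: ler_wpM2r => //.
have -> : (1 + dA) * (1 + D) = 1 + (dA + D + dA * D) by ring.
exact: lexx.
Qed.
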